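(* There is an absolute constant $c>0$ such that for every $\alpha\in(0,1/2]$ there exist a distribution $\mathcal D$ over $\mathcal X\times\{A,B\}\times\{0,1\}$, a hypothesis class $\mathcal H$ with an optimal Equalized-Odds-constrained classifier $h^*\in\mathcal H$ on $\mathcal D$, and a distribution $\mathcal Q$ such that, with $\widetilde{\mathcal D}=(1-\alpha)\mathcal D+\alpha\mathcal Q$, every (possibly randomized) hypothesis $h$ that satisfies Equalized Odds on $\widetilde{\mathcal D}$ satisfies $\Pr_{\mathcal D}[h(x,z)\ne y]\ge\Pr_{\mathcal D}[h^*(x,z)\ne y]+c$. In words: for a learner maximizing accuracy subject to Equalized Odds, an adversary with corruption fraction $\alpha$ can force an additional $\Omega(1)$ accuracy loss compared with the optimal fair classifier on the true distribution.
   Context: Examples are triples (features $x$, group $z\in\{A,B\}$, label $y\in\{0,1\}$); hypotheses may depend on the group. A hypothesis $h$ satisfies Equalized Odds on a distribution if $\Pr[h=1\mid y=1,z=A]=\Pr[h=1\mid y=1,z=B]$ and $\Pr[h=1\mid y=0,z=A]=\Pr[h=1\mid y=0,z=B]$. $h^*$ minimizes $\Pr_{\mathcal D}[h\ne y]$ over $h\in\mathcal H$ satisfying Equalized Odds on $\mathcal D$. *)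

(* Defs.v *)
From mathcomp Require Import all_boot all_order all_algebra.
From mathcomp Require Import reals.
Set Implicit Arguments. Unset Strict Implicit. Unset Printing Implicit Defensive.
Import Order.TTheory GRing.Theory Num.Theory.
Local Open Scope ring_scope.

(* Groups are encoded as bool: group A = true, group B = false.
   Labels y are bool: 1 = true, 0 = false. *)
Definition grpA : bool := true.
Definition grpB : bool := false.

Section Fair.
Variables (R : realType) (X : finType).

Definition is_dist (D : X -> bool -> bool -> R) : Prop :=
  (forall x z y, 0 <= D x z y) /\ \sum_(x : X) \sum_(z : bool) \sum_(y : bool) D x z y = 1.

(* A (possibly randomized) hypothesis: h x z = Pr[h(x,z) = 1]. *)
Definition is_randomized (h : X -> bool -> R) : Prop :=
  forall x z, 0 <= h x z <= 1.

Definition cell_mass (D : X -> bool -> bool -> R) (zv yv : bool) : R :=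
  \sum_(x : X) D x zv yv.

Definition cond_pos (D : X -> bool -> bool -> R) (h : X -> bool -> R) (zv yv : bool) : R :=
  (\sum_(x : X) D x zv yv * h x zv) / cell_mass D zv yv.

Definition equalized_odds (D : X -> bool -> bool -> R) (h : X -> bool -> R) : Prop :=
  cond_pos D h grpA true = cond_pos D h grpB true /\
  cond_pos D h grpA false = cond_pos D h grpB false.

Definition err (D : X -> bool -> bool -> R) (h : X -> bool -> R) : R :=
  \sum_(x : X) \sum_(z : bool)
     (D x z true * (1 - h x z) + D x z false * h x z).

Definition mixture (alpha : R) (D Q : X -> bool -> bool -> R) : X -> bool -> bool -> R :=
  fun x z y => (1 - alpha) * D x z y + alpha * Q x z y.

Definition optimal_EO (D : X -> bool -> bool -> R) (H : (X -> bool -> R) -> Prop)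
  (hstar : X -> bool -> R) : Prop :=
  H hstar /\ equalized_odds D hstar /\
  forall h, H h -> equalized_odds D h -> err D hstar <= err D h.

End Fair.

(* Main.v *)
Require Import Defs.
From mathcomp Require Import all_boot all_order all_algebra.
From mathcomp Require Import reals.
From mathcomp Require Import ring lra.
Import Order.TTheory GRing.Theory Num.Theory.
Local Open Scope ring_scope.

Theorem mainTheorem9 (R : realType) :
  exists c : R, 0 < c /\
  forall alpha : R, 0 < alpha -> alpha <= 2^-1 ->
  exists (X : finType) (D : X -> bool -> bool -> R)
         (H : (X -> bool -> R) -> Prop) (hstar : X -> bool -> R)
         (Q : X -> bool -> bool -> R),
    is_dist D /\ (forall z y, 0 < cell_mass D z y) /\
    (forall h, H h -> is_randomized h) /\
    optimal_EO D H hstar /\ is_dist Q /\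
    forall h : X -> bool -> R, is_randomized h ->
      equalized_odds (mixture alpha D Q) h ->
      err D hstar + c <= err D h.
Proof.
exists (4^-1); split; first lra.
move=> al al0 al2.
set d := al / (4 * (1 - al)).
set a := 2^-1 - d.
have d0 : 0 < d by rewrite /d; apply: divr_gt0; lra.
have d4 : d <= 4^-1.
  by rewrite /d ler_pdivrMr; lra.
have a4 : 4^-1 <= a by rewrite /a; lra.
have md : (1 - al) * d = al / 4.
  by rewrite /d; field; lra.
pose D := fun (x z y : bool) => if x == y then (if z then a else d) else 0 : R.
pose Q := fun (x z y : bool) => if (x == y) == z then 4^-1 else 0 : R.
pose hs := fun (x : bool) (z : bool) => if x then 1 else 0 : R.
exists bool, D, (fun h => h = hs), hs, Q.
split.
  split; first by move=> [] [] []; rewrite /D /=; lra.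
  rewrite !big_bool /D /= /a; lra.
split.
  move=> [] [] ; rewrite /cell_mass !big_bool /D /=; lra.
split.
  by move=> h -> x z; rewrite /hs; case: x; lra.
split.
  split=> //; split; last by move=> h -> _; lra.
  rewrite /equalized_odds /cond_pos /cell_mass !big_bool /D /hs /=.
  rewrite !mulr0 !mulr1 !addr0 !add0r !mul0r !divff //; apply/lt0r_neq0; lra.
split.
  split; first by move=> [] [] []; rewrite /Q /=; lra.
  rewrite !big_bool /Q /=; lra.
move=> h hr [].
rewrite /cond_pos /cell_mass /mixture !big_bool /D /Q /=.
rewrite !mulr0 !addr0 !add0r.
rewrite !mul0r !add0r !addr0.
have ma : 0 <= (1 - al) * a by apply: mulr_ge0; lra.
have m0 : (1 - al) * a + al / 4 != 0 by apply/lt0r_neq0; lra.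
rewrite !(mulrC ((1 - al) * a + al / 4)) !mulfK // md (addrC (al / 4)) => E1 E2.
have Eg : h true grpA = h false grpA by rewrite E1 E2 (addrC (al / 4 * _)).

rewrite /err !big_bool /D /hs /=.
have := hr true false; have := hr false false; have := hr true true; have := hr false true.
rewrite Eg.
nra.
Qed.
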